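(* Let $\Omega\subset\mathbb{C}^d$ be a complete Kobayashi hyperbolic domain. Then for every $o\in\Omega$, $x\in\partial\Omega$ and $R>0$, the set $H^b_o(x,R)$ is nonempty. Moreover, if $\Omega$ is bounded, then $\overline{H^b_o(x,R)}\cap\partial\Omega$ is nonempty.
   Context: For a Kobayashi hyperbolic domain $\Omega\subset\mathbb{C}^d$ with Kobayashi distance $\mathsf{k}_\Omega$, $x\in\partial\Omega$, $o\in\Omega$, $R>0$: $H^b_o(x,R)=\{z\in\Omega:\liminf_{w\to x}(\mathsf{k}_\Omega(z,w)-\mathsf{k}_\Omega(o,w))<\tfrac12\log R\}$; closure in $\mathbb{C}^d$. Complete Kobayashi hyperbolic means $(\Omega,\mathsf{k}_\Omega)$ is Cauchy complete. *)

(* Defs.v *)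
From Stdlib Require Import Reals.
From Stdlib Require Fin.
From Coquelicot Require Import Coquelicot.
Open Scope R_scope.

Definition Cd (d : nat) := Fin.t d -> C.

(* max-norm neighbourhood (defines the usual Euclidean topology of C^d) *)
Definition near_pt {d : nat} (x w : Cd d) (eps : R) : Prop :=
  forall i : Fin.t d, Cmod (w i - x i)%C < eps.

Definition is_open {d : nat} (U : Cd d -> Prop) : Prop :=
  forall z, U z -> exists eps, 0 < eps /\ forall w, near_pt z w eps -> U w.

Definition is_connected {d : nat} (Om : Cd d -> Prop) : Prop :=
  forall U V : Cd d -> Prop, is_open U -> is_open V ->
    (forall z, Om z -> U z \/ V z) ->
    (exists z, Om z /\ U z) -> (exists z, Om z /\ V z) ->
    exists z, Om z /\ U z /\ V z.

Definition is_domain {d : nat} (Om : Cd d -> Prop) : Prop :=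
  is_open Om /\ is_connected Om /\ exists z, Om z.

Definition closure {d : nat} (A : Cd d -> Prop) : Cd d -> Prop :=
  fun x => forall eps, 0 < eps -> exists a, A a /\ near_pt x a eps.

Definition boundary {d : nat} (A : Cd d -> Prop) : Cd d -> Prop :=
  fun x => closure A x /\ ~ A x.

Definition is_bounded {d : nat} (A : Cd d -> Prop) : Prop :=
  exists M, forall z, A z -> forall i, Cmod (z i) <= M.

Definition hol_disc {d : nat} (Om : Cd d -> Prop) (f : C -> Cd d) : Prop :=
  forall z : C, Cmod z < 1 ->
    Om (f z) /\ forall i : Fin.t d, ex_derive (fun u : C => f u i) z.

(* Poincare distance from 0 in the unit disc (curvature -4 convention) *)
Definition poinc0 (zeta : C) : R :=
  / 2 * ln ((1 + Cmod zeta) / (1 - Cmod zeta)).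

Fixpoint rsum (n : nat) (a : nat -> R) : R :=
  match n with O => 0 | S m => rsum m a + a m end.

Definition kob_chain_len {d : nat} (Om : Cd d -> Prop) (z w : Cd d) (l : R)
  : Prop :=
  exists (n : nat) (p : nat -> Cd d) (f : nat -> C -> Cd d) (zeta : nat -> C),
    p O = z /\ p n = w /\
    (forall j, (j < n)%nat ->
       hol_disc Om (f j) /\ Cmod (zeta j) < 1 /\
       f j 0%C = p j /\ f j (zeta j) = p (S j)) /\
    l = rsum n (fun j => poinc0 (zeta j)).

Definition kob_dist {d : nat} (Om : Cd d -> Prop) (z w : Cd d) : R :=
  real (Glb_Rbar (kob_chain_len Om z w)).

Definition kob_hyperbolic {d : nat} (Om : Cd d -> Prop) : Prop :=
  forall z w, Om z -> Om w -> z <> w -> 0 < kob_dist Om z w.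

Definition kob_complete {d : nat} (Om : Cd d -> Prop) : Prop :=
  forall u : nat -> Cd d, (forall n, Om (u n)) ->
    (forall eps, 0 < eps -> exists N, forall m n, (N <= m)%nat -> (N <= n)%nat ->
        kob_dist Om (u m) (u n) < eps) ->
    exists l, Om l /\ forall eps, 0 < eps -> exists N, forall n, (N <= n)%nat ->
        kob_dist Om (u n) l < eps.

Definition complete_kob_hyperbolic {d : nat} (Om : Cd d -> Prop) : Prop :=
  is_domain Om /\ kob_hyperbolic Om /\ kob_complete Om.

Definition liminf_at {d : nat} (Om : Cd d -> Prop) (x : Cd d) (g : Cd d -> R)
  : Rbar :=
  Lub_Rbar (fun r => exists eps, 0 < eps /\ (forall w, Om w -> near_pt x w eps -> r <= g w)).

Definition horoball {d : nat} (Om : Cd d -> Prop) (o x : Cd d) (Rr : R)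
  : Cd d -> Prop :=
  fun z => Om z /\
    Rbar_lt (liminf_at Om x (fun w => kob_dist Om z w - kob_dist Om o w))
            (Finite (/ 2 * ln Rr)).

(* Main.v *)
Require Import Defs.
From Stdlib Require Import Reals Lra Lia FunctionalExtensionality Classical ClassicalEpsilon.
From Stdlib Require Fin.
From Coquelicot Require Import Coquelicot.
Open Scope R_scope.


Lemma rsum_shift (n : nat) (a : nat -> R) :
  rsum (S n) a = a O + rsum n (fun j => a (S j)).
Proof. induction n; simpl in *; [lra|]. rewrite IHn. lra. Qed.

Lemma rsum_ext (n : nat) (a b : nat -> R) :
  (forall j, (j < n)%nat -> a j = b j) -> rsum n a = rsum n b.
Proof. induction n; intros H; simpl; auto. rewrite IHn; [rewrite H; auto|]; intros; apply H; lia. Qed.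

Lemma poinc0_ge0 (z : C) : Cmod z < 1 -> 0 <= poinc0 z.
Proof.
  intros H. unfold poinc0. pose proof (Cmod_ge_0 z).
  assert (1 <= (1 + Cmod z) / (1 - Cmod z)).
  { apply Rmult_le_reg_r with (1 - Cmod z); [lra|].
    unfold Rdiv. rewrite Rmult_assoc, Rinv_l; lra. }
  rewrite <- ln_1. assert (0 <= ln ((1 + Cmod z) / (1 - Cmod z)) - ln 1).
  { destruct H1. left. apply Rlt_Rminus, ln_increasing; lra. rewrite <- H1; lra. }
  rewrite ln_1 in *. lra.
Qed.

Inductive chainI {d : nat} (Om : Cd d -> Prop) : Cd d -> Cd d -> R -> Prop :=
| ch_nil : forall z, chainI Om z z 0
| ch_cons : forall f zeta w l, hol_disc Om f -> Cmod zeta < 1 ->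
    chainI Om (f zeta) w l -> chainI Om (f 0%C) w (poinc0 zeta + l).

Lemma KL_chainI {d} (Om : Cd d -> Prop) z w l :
  kob_chain_len Om z w l -> chainI Om z w l.
Proof.
  intros (n & p & f & zeta & H0 & Hn & Hj & Hl). subst.
  revert p f zeta Hj. induction n; intros p f zeta Hj.
  - simpl. constructor.
  - rewrite rsum_shift. destruct (Hj O ltac:(lia)) as (Hd & Hz & E0 & E1).
    rewrite <- E0. apply ch_cons; auto. rewrite E1.
    apply (IHn (fun j => p (S j)) (fun j => f (S j)) (fun j => zeta (S j))); auto.
    intros j Hj'. apply Hj. lia.
Qed.

Lemma chainI_KL {d} (Om : Cd d -> Prop) z w l :
  chainI Om z w l -> kob_chain_len Om z w l.
Proof.
  induction 1.
  - exists O, (fun _ => z), (fun _ _ => z), (fun _ => 0%C). repeat split; auto; intros; lia.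
  - destruct IHchainI as (n & p & g & ze & E0 & Hn & Hj & Hl).
    exists (S n), (fun j => match j with O => f 0%C | S j' => p j' end),
      (fun j => match j with O => f | S j' => g j' end),
      (fun j => match j with O => zeta | S j' => ze j' end).
    split; [reflexivity|]. split; [simpl; auto|]. split.
    + intros k Hk. destruct k as [|k]; simpl.
      * split; [auto|]. split; [auto|]. split; [auto|]. auto.
      * apply Hj. lia.
    + rewrite rsum_shift. simpl. rewrite Hl. reflexivity.
Qed.

Lemma chainI_ge0 {d} (Om : Cd d -> Prop) z w l : chainI Om z w l -> 0 <= l.
Proof. induction 1. lra. pose proof (poinc0_ge0 zeta H0). lra. Qed.

Lemma chainI_app {d} (Om : Cd d -> Prop) a b c l1 l2 :
  chainI Om a b l1 -> chainI Om b c l2 -> chainI Om a c (l1 + l2).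
Proof.
  induction 1; intros H2. rewrite Rplus_0_l; auto.
  rewrite Rplus_assoc. constructor; auto.
Qed.

Lemma chainI_disc {d} (Om : Cd d -> Prop) f zeta :
  hol_disc Om f -> Cmod zeta < 1 -> chainI Om (f 0%C) (f zeta) (poinc0 zeta).
Proof. intros. rewrite <- (Rplus_0_r (poinc0 zeta)). constructor; auto. constructor. Qed.

Lemma kob_dist_eq {d} (Om : Cd d -> Prop) z w :
  kob_dist Om z w = real (Glb_Rbar (chainI Om z w)).
Proof.
  unfold kob_dist. f_equal. apply Glb_Rbar_eqset. intros; split.
  apply KL_chainI. apply chainI_KL.
Qed.

Definition conn {d} (Om : Cd d -> Prop) z w := exists l, chainI Om z w l.

Lemma glb_facts (E : R -> Prop) :
  (exists l, E l) -> (forall l, E l -> 0 <= l) ->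
  Glb_Rbar E = Finite (real (Glb_Rbar E)) /\ 0 <= real (Glb_Rbar E) /\
  (forall l, E l -> real (Glb_Rbar E) <= l) /\
  (forall eps, 0 < eps -> exists l, E l /\ l < real (Glb_Rbar E) + eps).
Proof.
  intros [l0 Hl0] Hpos. destruct (Glb_Rbar_correct E) as [Hlb Hgr].
  assert (Hle : Rbar_le (Glb_Rbar E) l0) by (apply Hlb; auto).
  assert (Hge : Rbar_le 0 (Glb_Rbar E)) by (apply Hgr; intros x Hx; simpl; apply Hpos; auto).
  destruct (Glb_Rbar E) as [g| |] eqn:Eg; simpl in *; try contradiction.
  split; [reflexivity|]. split; [auto|]. split.
  - intros l Hl. specialize (Hlb l Hl). simpl in Hlb. auto.
  - intros eps He. apply Classical_Prop.NNPP. intros Hn.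
    assert (Rbar_le (g + eps) g).
    { apply Hgr. intros x Hx. simpl. apply Rnot_lt_le. intros Hlt. apply Hn. exists x. split; auto. }
    simpl in H. lra.
Qed.

Lemma kd_le {d} (Om : Cd d -> Prop) z w l : chainI Om z w l -> kob_dist Om z w <= l.
Proof.
  intros H. rewrite kob_dist_eq. destruct (glb_facts (chainI Om z w)) as (_&_&H3&_).
  exists l; auto. apply chainI_ge0. apply H3; auto.
Qed.

Lemma kd_ge0 {d} (Om : Cd d -> Prop) z w : 0 <= kob_dist Om z w.
Proof.
  rewrite kob_dist_eq. destruct (Classical_Prop.classic (exists l, chainI Om z w l)) as [Hc|Hc].
  - destruct (glb_facts (chainI Om z w)) as (_&H2&_); auto. apply chainI_ge0.
  - assert (Glb_Rbar (chainI Om z w) = p_infty).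
    { destruct (Glb_Rbar_correct (chainI Om z w)) as [_ Hgr].
      assert (Rbar_le p_infty (Glb_Rbar (chainI Om z w))).
      { apply Hgr. intros x Hx. exfalso. apply Hc. eauto. }
      destruct (Glb_Rbar (chainI Om z w)); simpl in *; auto; contradiction. }
    rewrite H. simpl. lra.
Qed.

Lemma kd_approx {d} (Om : Cd d -> Prop) z w : conn Om z w ->
  forall eps, 0 < eps -> exists l, chainI Om z w l /\ l < kob_dist Om z w + eps.
Proof.
  intros Hc eps He. rewrite kob_dist_eq. destruct (glb_facts (chainI Om z w)) as (_&_&_&H4); auto.
  apply chainI_ge0.
Qed.

Lemma kd_lower {d} (Om : Cd d -> Prop) z w m : conn Om z w ->
  (forall l, chainI Om z w l -> m <= l) -> m <= kob_dist Om z w.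
Proof.
  intros Hc H. apply Rnot_lt_le. intros Hlt.
  destruct (kd_approx Om z w Hc (m - kob_dist Om z w)) as (l & Hl & Hl2). lra.
  specialize (H l Hl). lra.
Qed.

Lemma kd_refl {d} (Om : Cd d -> Prop) z : kob_dist Om z z = 0.
Proof. apply Rle_antisym. apply (kd_le Om z z 0). constructor. apply kd_ge0. Qed.

Lemma kd_tri {d} (Om : Cd d -> Prop) a b c : conn Om a b -> conn Om b c ->
  kob_dist Om a c <= kob_dist Om a b + kob_dist Om b c.
Proof.
  intros H1 H2. apply Rnot_lt_le; intros Hlt.
  set (e := (kob_dist Om a c - kob_dist Om a b - kob_dist Om b c) / 2).
  destruct (kd_approx Om a b H1 e) as (l1 & C1 & L1). unfold e; lra.
  destruct (kd_approx Om b c H2 e) as (l2 & C2 & L2). unfold e; lra.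
  pose proof (kd_le Om a c _ (chainI_app Om _ _ _ _ _ C1 C2)). unfold e in *; lra.
Qed.

Lemma conn_trans {d} (Om : Cd d -> Prop) a b c : conn Om a b -> conn Om b c -> conn Om a c.
Proof. intros [l1 H1] [l2 H2]. exists (l1 + l2). eapply chainI_app; eauto. Qed.


Lemma Cmod_sq_lt (u v : C) : (fst u)^2 + (snd u)^2 < (fst v)^2 + (snd v)^2 -> Cmod u < Cmod v.
Proof. intros H. unfold Cmod. apply sqrt_lt_1; auto; nra. Qed.

Lemma Cmod_lt1 (u : C) : Cmod u < 1 <-> (fst u)^2 + (snd u)^2 < 1.
Proof.
  unfold Cmod. split; intros H.
  - assert (0 <= fst u ^ 2 + snd u ^ 2) by nra.
    rewrite <- sqrt_1 in H. apply sqrt_lt_0_alt in H. auto.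
  - rewrite <- sqrt_1. apply sqrt_lt_1; nra.
Qed.

Lemma is_derive_Cinv (a : C) : a <> 0%C ->
  @is_derive C_AbsRing (AbsRing_NormedModule C_AbsRing) (fun y : C => Cinv y) a (Copp (Cinv (a * a))).
Proof.
  intros Ha. split. apply is_linear_scal_l.
  intros x Hx. pose proof (@is_filter_lim_locally_unique C_AbsRing (AbsRing_NormedModule C_AbsRing) a x Hx) as Ex. subst x.
  intros eps. apply (@locally_le_locally_norm C_AbsRing (AbsRing_NormedModule C_AbsRing)).
  assert (Hpa : 0 < Cmod a) by (apply Cmod_gt_0; auto).
  set (del := Rmin (Cmod a / 2) (eps * (Cmod a * Cmod a * Cmod a) / 2)).
  assert (Hdel : 0 < del).
  { unfold del. apply Rmin_pos. lra. pose proof (cond_pos eps). 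
    apply Rmult_lt_0_compat; [|lra]. apply Rmult_lt_0_compat; auto. apply Rmult_lt_0_compat; auto. apply Rmult_lt_0_compat; auto. }
  exists (mkposreal del Hdel). intros y Hy. unfold ball_norm in Hy. simpl in Hy. change C in y.
  change (norm ?u) with (Cmod u) in *. change (minus y a) with (y - a)%C in *.
  assert (Hya : Cmod (y - a) < Cmod a / 2) by (eapply Rlt_le_trans; [apply Hy| apply Rmin_l]).
  assert (Hya2 : Cmod (y - a) < eps * (Cmod a * Cmod a * Cmod a) / 2) by (eapply Rlt_le_trans; [apply Hy| apply Rmin_r]).
  assert (Hy0 : Cmod a / 2 <= Cmod y).
  { assert (Cmod a <= Cmod y + Cmod (a - y)).
    { replace a with (y + (a - y))%C at 1 by ring. apply Cmod_triangle. }
    replace (a - y)%C with (- (y - a))%C in H by ring. rewrite Cmod_opp in H. lra. }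
  assert (Hyn : y <> 0%C). { intros E. subst. rewrite Cmod_0 in Hy0. lra. }
  change (minus (minus (/ y) (/ a)) (scal (y - a) (- / (a * a))))%C
    with ((/ y - / a) - (y - a) * (- / (a * a)))%C.
  replace ((/ y - / a) - (y - a) * (- / (a * a)))%C with ((y - a) * (y - a) / (y * (a * a)))%C
    by (field; split; auto).
  rewrite Cmod_div by (apply Cmult_neq_0; auto; apply Cmult_neq_0; auto).
  rewrite !Cmod_mult.
  pose proof (Cmod_ge_0 (y - a)).
  apply Rmult_le_reg_r with (Cmod y * (Cmod a * Cmod a)). 
  { apply Rmult_lt_0_compat. lra. nra. }
  unfold Rdiv. rewrite Rmult_assoc, Rinv_l by (apply Rgt_not_eq; apply Rmult_lt_0_compat; nra).
  rewrite Rmult_1_r.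
  assert (Cmod (y - a) <= eps * (Cmod y * (Cmod a * Cmod a))).
  { pose proof (cond_pos eps). assert (0 < Cmod a * Cmod a) by nra.
    assert (eps * (Cmod a * Cmod a * Cmod a) / 2 <= eps * (Cmod y * (Cmod a * Cmod a))).
    { replace (eps * (Cmod a * Cmod a * Cmod a) / 2) with (eps * ((Cmod a / 2) * (Cmod a * Cmod a))) by field.
      apply Rmult_le_compat_l; [lra|]. apply Rmult_le_compat_r; lra. }
    lra. }
  replace (eps * Cmod (y - a) * (Cmod y * (Cmod a * Cmod a))) with (Cmod (y - a) * (eps * (Cmod y * (Cmod a * Cmod a)))) by ring.
  apply Rmult_le_compat_l; auto.
Qed.

Definition exdA (f : C -> C) (x : C) := @ex_derive C_AbsRing (AbsRing_NormedModule C_AbsRing) f x.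
Definition exdC (f : C -> C) (x : C) := @ex_derive C_AbsRing C_NormedModule f x.

Lemma exd_AC f x : exdA f x -> exdC f x.
Proof.
  intros [l [Hlin Hdom]]. exists l. split.
  - destruct Hlin as [H1 H2 [M HM]]. split; auto. exists M. exact HM.
  - intros y Hy eps. exact (Hdom y Hy eps).
Qed.
Lemma exd_CA f x : exdC f x -> exdA f x.
Proof.
  intros [l [Hlin Hdom]]. exists l. split.
  - destruct Hlin as [H1 H2 [M HM]]. split; auto. exists M. exact HM.
  - intros y Hy eps. exact (Hdom y Hy eps).
Qed.

Lemma exd_plus (f g : C -> C) x : exdA f x -> exdA g x -> exdA (fun y => (f y + g y)%C) x.
Proof. intros [l1 H1] [l2 H2]. exists (plus l1 l2). exact (@is_derive_plus C_AbsRing (AbsRing_NormedModule C_AbsRing) f g x l1 l2 H1 H2). Qed.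
Lemma exd_minus (f g : C -> C) x : exdA f x -> exdA g x -> exdA (fun y => (f y - g y)%C) x.
Proof. intros [l1 H1] [l2 H2]. exists (minus l1 l2). exact (@is_derive_minus C_AbsRing (AbsRing_NormedModule C_AbsRing) f g x l1 l2 H1 H2). Qed.
Lemma exd_mult (f g : C -> C) x : exdA f x -> exdA g x -> exdA (fun y => (f y * g y)%C) x.
Proof.
  intros [l1 H1] [l2 H2]. eexists. apply (is_derive_mult f g x l1 l2 H1 H2).
  intros. change (n * m = m * n)%C. ring.
Qed.
Lemma exd_const (a : C) x : exdA (fun _ : C => a) x.
Proof. exists zero. apply (@is_derive_const C_AbsRing (AbsRing_NormedModule C_AbsRing)). Qed.
Lemma exd_id x : exdA (fun y : C => y) x.
Proof. exists one. apply (@is_derive_id C_AbsRing). Qed.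
Lemma exd_inv (f : C -> C) x : exdA f x -> f x <> 0%C -> exdA (fun y => Cinv (f y)) x.
Proof.
  intros Hf Hn. unfold exdA. apply (@ex_derive_comp C_AbsRing (AbsRing_NormedModule C_AbsRing) (fun y : C => Cinv y) f x); auto.
  eexists. apply is_derive_Cinv; auto.
Qed.

Lemma hol_disc_comp {d} (Om : Cd d -> Prop) (f : C -> Cd d) (phi : C -> C) :
  hol_disc Om f -> (forall v, Cmod v < 1 -> Cmod (phi v) < 1 /\ exdA phi v) ->
  hol_disc Om (fun v => f (phi v)).
Proof.
  intros Hf Hp z Hz. destruct (Hp z Hz) as [H1 H2]. destruct (Hf _ H1) as [H3 H4].
  split; auto. intros i. apply (ex_derive_comp (fun u => f u i) phi z); auto.
Qed.

Definition mob (zeta v : C) : C := ((zeta - v) / (1 - Cconj zeta * v))%C.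

Lemma mob_den_nz (zeta v : C) : Cmod zeta < 1 -> Cmod v < 1 -> (1 - Cconj zeta * v)%C <> 0%C.
Proof.
  intros H1 H2 E. apply Cmod_lt1 in H1. apply Cmod_lt1 in H2.
  destruct zeta as [a b], v as [x y]. simpl in *.
  injection E. intros E2 E1. nra.
Qed.

Lemma mob_disc (zeta v : C) : Cmod zeta < 1 -> Cmod v < 1 -> Cmod (mob zeta v) < 1.
Proof.
  intros H1 H2. unfold mob. pose proof (mob_den_nz _ _ H1 H2) as Hn.
  rewrite Cmod_div; auto. assert (0 < Cmod (1 - Cconj zeta * v)) by (apply Cmod_gt_0; auto).
  apply Rmult_lt_reg_r with (Cmod (1 - Cconj zeta * v)); auto.
  unfold Rdiv. rewrite Rmult_assoc, Rinv_l by lra. rewrite Rmult_1_r, Rmult_1_l.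
  apply Cmod_sq_lt. apply Cmod_lt1 in H1. apply Cmod_lt1 in H2.
  destruct zeta as [a b], v as [x y]. simpl in *. nra.
Qed.

Lemma mob_exd (zeta v : C) : Cmod zeta < 1 -> Cmod v < 1 -> exdA (mob zeta) v.
Proof.
  intros H1 H2. unfold mob, Cdiv. apply exd_mult.
  apply exd_minus. apply exd_const. apply exd_id.
  apply exd_inv. apply exd_minus. apply exd_const. apply exd_mult. apply exd_const. apply exd_id.
  apply mob_den_nz; auto.
Qed.

Lemma mob_0 zeta : mob zeta 0%C = zeta.
Proof. destruct zeta as [a b]. unfold mob, Cdiv, Cinv, Cconj, Cmult, Cminus, Cplus, Copp. simpl. f_equal; field. Qed.

Lemma mob_z zeta : mob zeta zeta = 0%C.
Proof. destruct zeta as [a b]. unfold mob, Cdiv, Cinv, Cconj, Cmult, Cminus, Cplus, Copp, RtoC. simpl. f_equal; ring. Qed.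


Lemma chainI_rev {d} (Om : Cd d -> Prop) z w l : chainI Om z w l -> chainI Om w z l.
Proof.
  induction 1. constructor.
  assert (Hg : hol_disc Om (fun v => f (mob zeta v))).
  { apply hol_disc_comp; auto. intros v Hv. split. apply mob_disc; auto. apply mob_exd; auto. }
  pose proof (chainI_disc Om _ zeta Hg H0) as Hd. simpl in Hd. rewrite mob_0, mob_z in Hd.
  rewrite Rplus_comm. eapply chainI_app; eauto.
Qed.

Lemma kd_sym {d} (Om : Cd d -> Prop) z w : kob_dist Om z w = kob_dist Om w z.
Proof.
  rewrite !kob_dist_eq. f_equal. apply Glb_Rbar_eqset. intros; split; apply chainI_rev.
Qed.

Lemma conn_sym {d} (Om : Cd d -> Prop) z w : conn Om z w -> conn Om w z.
Proof. intros [l H]. exists l. apply chainI_rev; auto. Qed.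

Lemma near_pt_trans {d} (a b c : Cd d) e1 e2 : near_pt a b e1 -> near_pt b c e2 -> near_pt a c (e1 + e2).
Proof.
  intros H1 H2 i. specialize (H1 i). specialize (H2 i).
  replace (c i - a i)%C with ((c i - b i) + (b i - a i))%C by ring.
  eapply Rle_lt_trans. apply Cmod_triangle. lra.
Qed.

Lemma near_pt_sym {d} (a b : Cd d) e : near_pt a b e -> near_pt b a e.
Proof.
  intros H i. specialize (H i). replace (a i - b i)%C with (- (b i - a i))%C by ring.
  rewrite Cmod_opp. auto.
Qed.

Lemma near_pt_mono {d} (a b : Cd d) e1 e2 : e1 <= e2 -> near_pt a b e1 -> near_pt a b e2.
Proof. intros H H1 i. specialize (H1 i). lra. Qed.

Lemma near_pt_refl {d} (a : Cd d) e : 0 < e -> near_pt a a e.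
Proof. intros H i. replace (a i - a i)%C with (RtoC 0) by ring. rewrite Cmod_0. auto. Qed.

Lemma Cmod_RtoC_pos (t : R) : 0 <= t -> Cmod (RtoC t) = t.
Proof. intros. rewrite Cmod_R. apply Rabs_pos_eq; auto. Qed.

Lemma poinc0_small (t : R) : 0 <= t <= 1/2 -> poinc0 (RtoC t) <= 2 * t.
Proof.
  intros Ht. unfold poinc0. rewrite Cmod_RtoC_pos by lra.
  assert (Hp : 0 < (1 + t) / (1 - t)) by (apply Rdiv_lt_0_compat; lra).
  pose proof (exp_ineq1_le (ln ((1 + t) / (1 - t)))) as H. rewrite exp_ln in H by auto.
  assert ((1 + t) / (1 - t) - 1 <= 4 * t).
  { apply Rmult_le_reg_r with (1 - t). lra. unfold Rdiv. rewrite Rmult_minus_distr_r, Rmult_assoc, Rinv_l by lra. nra. }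
  lra.
Qed.

Definition aff {d} (c w : Cd d) (v : C) : Cd d := fun i => (c i + v * w i)%C.

Lemma aff_hol {d} (Om : Cd d -> Prop) (c w : Cd d) :
  (forall v, Cmod v < 1 -> Om (aff c w v)) -> hol_disc Om (aff c w).
Proof.
  intros H v Hv. split; auto. intros i. unfold aff. apply exd_AC.
  apply exd_plus. apply exd_const. apply exd_mult. apply exd_id. apply exd_const.
Qed.

Lemma aff_0 {d} (c w : Cd d) : aff c w 0%C = c.
Proof. apply functional_extensionality; intros i. unfold aff. ring. Qed.

Lemma ub_chain {d} (Om : Cd d -> Prop) (c u : Cd d) (r q : R) :
  (forall y, near_pt c y r -> Om y) -> 0 < q -> q < r -> near_pt c u q ->
  chainI Om c u (poinc0 (RtoC (q / r))).
Proof.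
  intros HO Hq Hqr Hu.
  set (w := fun i => (RtoC (r / q) * (u i - c i))%C).
  assert (Hh : hol_disc Om (aff c w)).
  { apply aff_hol. intros v Hv. apply HO. intros i. unfold aff, w.
    replace (c i + v * (RtoC (r / q) * (u i - c i)) - c i)%C with (v * RtoC (r / q) * (u i - c i))%C by ring.
    rewrite !Cmod_mult, Cmod_RtoC_pos by (apply Rlt_le, Rdiv_lt_0_compat; lra).
    specialize (Hu i). pose proof (Cmod_ge_0 v). pose proof (Cmod_ge_0 (u i - c i)).
    assert (Cmod v * (r / q) * Cmod (u i - c i) <= 1 * (r / q) * Cmod (u i - c i)).
    { apply Rmult_le_compat_r; auto. apply Rmult_le_compat_r. apply Rlt_le, Rdiv_lt_0_compat; lra. lra. }
    assert ((r / q) * Cmod (u i - c i) < (r / q) * q).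
    { apply Rmult_lt_compat_l; auto. apply Rdiv_lt_0_compat; lra. }
    replace ((r / q) * q) with r in H2 by (field; lra). lra. }
  assert (Hz : Cmod (RtoC (q / r)) < 1).
  { rewrite Cmod_RtoC_pos by (apply Rlt_le, Rdiv_lt_0_compat; lra).
    apply Rmult_lt_reg_r with r. lra. unfold Rdiv. rewrite Rmult_assoc, Rinv_l; lra. }
  pose proof (chainI_disc Om _ _ Hh Hz) as Hc. rewrite aff_0 in Hc.
  replace (aff c w (RtoC (q / r))) with u in Hc; auto.
  apply functional_extensionality; intros i. unfold aff, w.
  replace (RtoC (q / r) * (RtoC (r / q) * (u i - c i)))%C with (RtoC (q / r * (r / q)) * (u i - c i))%C.
  replace (q / r * (r / q)) with 1 by (field; lra). ring.
  rewrite RtoC_mult. ring.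
Qed.

Lemma ub_kd {d} (Om : Cd d -> Prop) (c u : Cd d) (r q : R) :
  (forall y, near_pt c y r -> Om y) -> 0 < q -> q <= r / 2 -> near_pt c u q ->
  exists l, chainI Om c u l /\ l <= 2 * q / r.
Proof.
  intros HO Hq Hqr Hu. exists (poinc0 (RtoC (q / r))). split.
  apply ub_chain; auto; lra.
  replace (2 * q / r) with (2 * (q / r)) by (field; lra).
  apply poinc0_small. split. apply Rlt_le, Rdiv_lt_0_compat; lra.
  apply Rmult_le_reg_r with r. lra. unfold Rdiv. rewrite Rmult_assoc, Rinv_l; lra.
Qed.

Lemma dom_conn {d} (Om : Cd d -> Prop) : is_domain Om -> forall a b, Om a -> Om b -> conn Om a b.
Proof.
  intros [Hop [Hcn _]] a b Ha Hb.
  assert (Hloc : forall y, Om y -> exists e, 0 < e /\ forall w, near_pt y w e -> Om w /\ (conn Om y w /\ conn Om w y)).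
  { intros y Hy. destruct (Hop y Hy) as (e & He & HE). exists (e / 2). split. lra.
    intros w Hw. split. apply HE. eapply near_pt_mono; [|eauto]; lra.
    split.
    - exists (poinc0 (RtoC ((e/2) / e))). apply ub_chain; auto; lra.
    - exists (poinc0 (RtoC ((e/2) / e))). apply chainI_rev. apply ub_chain; auto; lra.
  }
  set (U := fun y => exists e, 0 < e /\ forall w, near_pt y w e -> Om w /\ conn Om a w).
  set (V := fun y => exists e, 0 < e /\ forall w, near_pt y w e -> Om w /\ ~ conn Om a w).
  assert (HoU : forall (P : Cd d -> Prop), is_open (fun y => exists e, 0 < e /\ forall w, near_pt y w e -> P w)).
  { intros P y (e & He & HP). exists (e / 2). split. lra. intros w Hw. exists (e / 2). split. lra.
    intros w' Hw'. apply HP. replace e with (e/2 + e/2) by lra. eapply near_pt_trans; eauto. }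
  assert (Hcov : forall y, Om y -> U y \/ V y).
  { intros y Hy. destruct (Hloc y Hy) as (e & He & HE). destruct (classic (conn Om a y)) as [Hc|Hc].
    - left. exists e. split; auto. intros w Hw. destruct (HE w Hw) as [H1 [H2 _]]. split; auto.
      eapply conn_trans; eauto.
    - right. exists e. split; auto. intros w Hw. destruct (HE w Hw) as [H1 [_ H3]]. split; auto.
      intros Hc'. apply Hc. eapply conn_trans; eauto. }
  assert (HUa : exists z, Om z /\ U z).
  { exists a. split; auto. destruct (Hloc a Ha) as (e & He & HE). exists e. split; auto.
    intros w Hw. destruct (HE w Hw) as [H1 [H2 _]]. auto. }
  destruct (classic (conn Om a b)) as [Hab|Hab]; auto. exfalso.
  assert (HVb : exists z, Om z /\ V z).
  { exists b. split; auto. destruct (Hcov b Hb) as [(e & He & HE)|HV]; auto.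
    exfalso. apply Hab. apply (HE b (near_pt_refl b e He)). }
  destruct (Hcn U V (HoU _) (HoU _) Hcov HUa HVb) as (z & Hz & (e1 & He1 & H1) & (e2 & He2 & H2)).
  destruct (H1 z (near_pt_refl z e1 He1)) as [_ Hc1]. destruct (H2 z (near_pt_refl z e2 He2)) as [_ Hc2].
  auto.
Qed.


Lemma ln_le' x y : 0 < x -> x <= y -> ln x <= ln y.
Proof. intros H [H1|H1]. left; apply ln_increasing; auto. subst; lra. Qed.

Lemma exp_le_exp' x y : x <= y -> exp x <= exp y.
Proof. intros [H|H]. left; apply exp_increasing; auto. subst; lra. Qed.

Lemma poinc0_val (z : C) s : Cmod z = s -> poinc0 z = / 2 * ln ((1 + s) / (1 - s)).
Proof. intros H. unfold poinc0. rewrite H. reflexivity. Qed.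

Lemma split_disc {d} (Om : Cd d -> Prop) f zeta t :
  hol_disc Om f -> Cmod zeta < 1 -> 0 <= t <= poinc0 zeta ->
  exists u l1 l2, chainI Om (f 0%C) u l1 /\ l1 <= t /\ chainI Om u (f zeta) l2 /\ l2 <= poinc0 zeta - t / 2.
Proof.
  intros Hf Hz Ht. set (r := Cmod zeta). pose proof (Cmod_ge_0 zeta) as Hr0. fold r in Hr0.
  destruct (Req_dec r 0) as [Hr|Hr].
  - assert (poinc0 zeta = 0).
    { rewrite (poinc0_val zeta r) by auto. rewrite Hr. replace ((1 + 0) / (1 - 0)) with 1 by field. rewrite ln_1. lra. }
    exists (f 0%C), 0, (poinc0 zeta). split. constructor. split. lra. split.
    apply chainI_disc; auto. lra.
  - assert (Hrp : 0 < r) by lra. fold r in Hz.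
    set (E := exp (2 * t)). assert (HE1 : 1 <= E).
    { unfold E. pose proof (exp_ineq1_le (2 * t)). lra. }
    set (rho := (E - 1) / (E + 1)).
    assert (HEr : E <= (1 + r) / (1 - r)).
    { unfold E. rewrite <- (exp_ln ((1 + r) / (1 - r))) by (apply Rdiv_lt_0_compat; lra).
      apply exp_le_exp'. rewrite (poinc0_val zeta r) in Ht by auto. lra. }
    assert (Hrho0 : 0 <= rho) by (unfold rho; apply Rmult_le_pos; [lra| apply Rlt_le, Rinv_0_lt_compat; lra]).
    assert (Hrhor : rho <= r).
    { unfold rho. apply Rmult_le_reg_r with (E + 1). lra. unfold Rdiv. rewrite Rmult_assoc, Rinv_l by lra.
      apply Rmult_le_compat_r with (r := 1 - r) in HEr; [|lra].
      unfold Rdiv in HEr. rewrite Rmult_assoc, Rinv_l in HEr by lra. lra. }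
    assert (Hrho1 : rho < 1) by lra.
    set (a := (RtoC (rho / r) * zeta)%C).
    assert (Ha : Cmod a = rho).
    { unfold a. rewrite Cmod_mult, Cmod_RtoC_pos. fold r. field. lra.
      apply Rmult_le_pos; auto. apply Rlt_le, Rinv_0_lt_compat; lra. }
    assert (Hpa : poinc0 a = t).
    { rewrite (poinc0_val a rho Ha). replace ((1 + rho) / (1 - rho)) with E.
      unfold E. rewrite ln_exp. field. unfold rho. field. split; lra. }
    set (psi := fun v : C => (a + RtoC (1 - rho) * v)%C).
    assert (Hpsi : forall v, Cmod v < 1 -> Cmod (psi v) < 1 /\ exdA psi v).
    { intros v Hv. split.
      - unfold psi. eapply Rle_lt_trans. apply Cmod_triangle. rewrite Ha, Cmod_mult, Cmod_RtoC_pos by lra.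
        pose proof (Cmod_ge_0 v). nra.
      - unfold psi. apply exd_plus. apply exd_const. apply exd_mult. apply exd_const. apply exd_id. }
    assert (Hg : hol_disc Om (fun v => f (psi v))) by (apply hol_disc_comp; auto).
    set (eta := (RtoC (/ (1 - rho)) * (zeta - a))%C).
    assert (Hza : Cmod (zeta - a) = r - rho).
    { unfold a. replace (zeta - RtoC (rho / r) * zeta)%C with (RtoC (1 - rho / r) * zeta)%C.
      rewrite Cmod_mult, Cmod_RtoC_pos. fold r. field. lra.
      assert (rho / r <= 1). { apply Rmult_le_reg_r with r; auto. unfold Rdiv. rewrite Rmult_assoc, Rinv_l; lra. } lra.
      rewrite RtoC_minus. ring. }
    assert (Heta : Cmod eta = (r - rho) / (1 - rho)).
    { unfold eta. rewrite Cmod_mult, Hza, Cmod_RtoC_pos. field. lra. apply Rlt_le, Rinv_0_lt_compat. lra. }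
    assert (Heta1 : Cmod eta < 1).
    { rewrite Heta. apply Rmult_lt_reg_r with (1 - rho). lra. unfold Rdiv. rewrite Rmult_assoc, Rinv_l; lra. }
    assert (Hpe : psi eta = zeta).
    { unfold psi, eta. rewrite Cmult_assoc, <- RtoC_mult. rewrite Rinv_r by lra. ring. }
    assert (Hp0 : psi 0%C = a) by (unfold psi; ring).
    pose proof (chainI_disc Om _ _ Hg Heta1) as C2. simpl in C2. rewrite Hp0, Hpe in C2.
    assert (Ha1 : Cmod a < 1) by lra.
    pose proof (chainI_disc Om _ _ Hf Ha1) as C1.
    exists (f a), (poinc0 a), (poinc0 eta). split; auto. split. lra. split; auto.
    rewrite (poinc0_val eta _ Heta), (poinc0_val zeta r) by auto. rewrite <- Hpa, (poinc0_val a rho Ha).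
    set (A := (1 + (r - rho) / (1 - rho)) / (1 - (r - rho) / (1 - rho))).
    set (B := (1 + rho) / (1 - rho)). set (Cc := (1 + r) / (1 - r)).
    assert (HA : A = (1 + r - 2 * rho) / (1 - r)).
    { unfold A. field. split; lra. }
    assert (HAp : 0 < A) by (rewrite HA; apply Rdiv_lt_0_compat; lra).
    assert (HBp : 0 < B) by (apply Rdiv_lt_0_compat; lra).
    assert (HCp : 0 < Cc) by (apply Rdiv_lt_0_compat; lra).
    assert (Hineq : A * A * B <= Cc * Cc).
    { rewrite HA. unfold B, Cc.
      replace ((1 + r - 2 * rho) / (1 - r) * ((1 + r - 2 * rho) / (1 - r)) * ((1 + rho) / (1 - rho)))
        with ((1 + r - 2 * rho) * (1 + r - 2 * rho) * (1 + rho) / ((1 - r) * (1 - r) * (1 - rho))) by (field; lra).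
      replace ((1 + r) / (1 - r) * ((1 + r) / (1 - r)))
        with ((1 + r) * (1 + r) * (1 - rho) / ((1 - r) * (1 - r) * (1 - rho))) by (field; lra).
      unfold Rdiv. apply Rmult_le_compat_r. apply Rlt_le, Rinv_0_lt_compat. 
      apply Rmult_lt_0_compat; [nra|lra].
      assert (H1 : 0 <= (1 + r) * (1 - r)) by (apply Rmult_le_pos; lra).
      assert (H2 : 0 <= 2 * rho * (r - rho)) by (apply Rmult_le_pos; lra).
      assert (H3 : 0 <= 2 * rho * ((1 + r) * (1 - r) + 2 * rho * (r - rho))) by (apply Rmult_le_pos; lra).
      lra. }
    apply ln_le' in Hineq; [|apply Rmult_lt_0_compat; auto; apply Rmult_lt_0_compat; auto].
    rewrite !ln_mult in Hineq by (auto; apply Rmult_lt_0_compat; auto). lra.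
Qed.

Lemma split_chain {d} (Om : Cd d -> Prop) z w L : chainI Om z w L ->
  forall t, 0 <= t <= L -> exists u l1 l2, chainI Om z u l1 /\ l1 <= t /\ chainI Om u w l2 /\ l2 <= L - t / 2.
Proof.
  induction 1; intros t Ht.
  - exists z, 0, 0. split. constructor. split. lra. split. constructor. lra.
  - pose proof (chainI_ge0 _ _ _ _ H1) as Hl. pose proof (poinc0_ge0 zeta H0).
    destruct (Rle_lt_dec t (poinc0 zeta)) as [Hle|Hlt].
    + destruct (split_disc Om f zeta t H H0) as (u & l1 & l2 & C1 & L1 & C2 & L2). lra.
      exists u, l1, (l2 + l). split; auto. split; auto. split. eapply chainI_app; eauto. lra.
    + destruct (IHchainI (t - poinc0 zeta)) as (u & l1 & l2 & C1 & L1 & C2 & L2). lra.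
      exists u, (poinc0 zeta + l1), l2. split. constructor; auto. split. lra. split; auto. lra.
Qed.


Fixpoint mx (n : nat) : (Fin.t n -> R) -> R :=
  match n with
  | O => fun _ => 0
  | S m => fun v => Rmax (v Fin.F1) (mx m (fun i => v (Fin.FS i)))
  end.

Lemma mx_ge n (v : Fin.t n -> R) i : v i <= mx n v.
Proof.
  revert v. induction i; intros v; simpl.
  - apply Rmax_l.
  - eapply Rle_trans; [apply (IHi (fun j => v (Fin.FS j)))|]. apply Rmax_r.
Qed.

Lemma mx_lt n (v : Fin.t n -> R) c : 0 < c -> (forall i, v i < c) -> mx n v < c.
Proof.
  revert v; induction n; intros v Hc H; simpl. auto.
  apply Rmax_lub_lt. apply H. apply IHn; auto.
Qed.

Lemma mx_attain n (v : Fin.t n -> R) c : 0 < c -> c <= mx n v -> exists i, c <= v i.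
Proof.
  revert v; induction n; intros v Hc H; simpl in H. lra.
  unfold Rmax in H. destruct (Rle_dec (v Fin.F1) (mx n (fun i => v (Fin.FS i)))).
  - destruct (IHn _ Hc H) as [i Hi]. eauto.
  - eauto.
Qed.

Lemma mx_shift n (v w : Fin.t n -> R) e : 0 <= e -> (forall i, v i <= w i + e) -> mx n v <= mx n w + e.
Proof.
  revert v w; induction n; intros v w He H; simpl. lra.
  pose proof (H Fin.F1). pose proof (IHn (fun i => v (Fin.FS i)) (fun i => w (Fin.FS i)) He (fun i => H (Fin.FS i))).
  unfold Rmax. repeat destruct Rle_dec; lra.
Qed.

Lemma fin_unif n (P : Fin.t n -> R -> Prop) :
  (forall i, exists del, 0 < del /\ P i del) ->
  (forall i del del', 0 < del' <= del -> P i del -> P i del') ->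
  exists del, 0 < del /\ forall i, P i del.
Proof.
  revert P; induction n; intros P H Hm.
  - exists 1. split. lra. intros i. exact (Fin.case0 (fun i => P i 1) i).
  - destruct (H Fin.F1) as (d1 & Hd1 & P1).
    destruct (IHn (fun i => P (Fin.FS i))) as (d2 & Hd2 & P2); auto.
    intros i del del' Hd. apply Hm; auto.
    exists (Rmin d1 d2). split. apply Rmin_pos; auto.
    intros i. apply (Fin.caseS' i).
    + apply Hm with d1; auto. split. apply Rmin_pos; auto. apply Rmin_l.
    + intros j. apply Hm with d2; auto. split. apply Rmin_pos; auto. apply Rmin_r.
Qed.

Lemma exd_cont (g : C -> C) x : exdC g x ->
  forall eps, 0 < eps -> exists del, 0 < del /\ forall y, Cmod (y - x) < del -> Cmod (g y - g x) < eps.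
Proof.
  intros H eps He. apply exd_CA in H.
  pose proof (@ex_derive_continuous C_AbsRing (AbsRing_NormedModule C_AbsRing) g x H) as Hc.
  unfold continuous in Hc.
  assert (Hl : @locally (AbsRing_NormedModule C_AbsRing) (g x) (fun y => @ball (AbsRing_NormedModule C_AbsRing) (g x) eps y)).
  { exists (mkposreal eps He). auto. }
  specialize (Hc _ Hl). destruct Hc as [del Hd].
  exists del. split. apply cond_pos. intros y Hy. apply (Hd y). exact Hy.
Qed.

Lemma Cmod_rev_tri (a b : C) : Rabs (Cmod a - Cmod b) <= Cmod (a - b).
Proof.
  assert (Cmod a <= Cmod (a - b) + Cmod b).
  { replace a with ((a - b) + b)%C at 1 by ring. apply Cmod_triangle. }
  assert (Cmod b <= Cmod (a - b) + Cmod a).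
  { replace b with (- (a - b) + a)%C at 1 by ring. rewrite <- (Cmod_opp (a - b)). apply Cmod_triangle. }
  unfold Rabs. destruct Rcase_abs; lra.
Qed.

Lemma path_cont {d} (f : C -> Cd d) (zeta : C) (z : Cd d) (a : R) :
  (forall i, exdC (fun u => f u i) (RtoC a * zeta)%C) -> Cmod zeta < 1 ->
  continuity_pt (fun t => mx d (fun i => Cmod (f (RtoC t * zeta)%C i - z i))) a.
Proof.
  intros Hd Hz eps He.
  destruct (fin_unif d (fun i del => forall t, Rabs (t - a) < del ->
      Cmod (f (RtoC t * zeta)%C i - f (RtoC a * zeta)%C i) < eps / 2)) as (del & Hdel & HD).
  { intros i. destruct (exd_cont _ _ (Hd i) (eps / 2)) as (del & Hdel & HD). lra.
    exists del. split; auto. intros t Ht. apply HD.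
    replace (RtoC t * zeta - RtoC a * zeta)%C with (RtoC (t - a) * zeta)%C.
    rewrite Cmod_mult, Cmod_R. pose proof (Cmod_ge_0 zeta). pose proof (Rabs_pos (t - a)). nra.
    rewrite RtoC_minus. ring. }
  { intros i del0 del' Hd' H t Ht. apply H. lra. }
  exists del. split. lra. intros t [_ Ht]. simpl in Ht. unfold R_dist in Ht. simpl. unfold R_dist.
  idtac.
  assert (Hc : forall i, Rabs (Cmod (f (RtoC t * zeta)%C i - z i) - Cmod (f (RtoC a * zeta)%C i - z i)) <= eps / 2).
  { intros i. eapply Rle_trans. apply Cmod_rev_tri.
    replace (f (RtoC t * zeta)%C i - z i - (f (RtoC a * zeta)%C i - z i))%C
      with (f (RtoC t * zeta)%C i - f (RtoC a * zeta)%C i)%C by ring.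
    left. apply (HD i t Ht). }
  assert (H1 := mx_shift d (fun i => Cmod (f (RtoC t * zeta)%C i - z i)) (fun i => Cmod (f (RtoC a * zeta)%C i - z i)) (eps/2)).
  assert (H2 := mx_shift d (fun i => Cmod (f (RtoC a * zeta)%C i - z i)) (fun i => Cmod (f (RtoC t * zeta)%C i - z i)) (eps/2)).
  simpl in H1, H2.
  assert (mx d (fun i => Cmod (f (RtoC t * zeta)%C i - z i)) <= mx d (fun i => Cmod (f (RtoC a * zeta)%C i - z i)) + eps / 2).
  { apply H1. lra. intros i. specialize (Hc i). apply Rabs_le_between' in Hc. lra. }
  assert (mx d (fun i => Cmod (f (RtoC a * zeta)%C i - z i)) <= mx d (fun i => Cmod (f (RtoC t * zeta)%C i - z i)) + eps / 2).
  { apply H2. lra. intros i. specialize (Hc i). apply Rabs_le_between' in Hc. lra. }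
  unfold Rabs. destruct Rcase_abs; lra.
Qed.

Lemma poinc0_mono (a b : C) : Cmod a <= Cmod b -> Cmod b < 1 -> poinc0 a <= poinc0 b.
Proof.
  intros H1 H2. pose proof (Cmod_ge_0 a). unfold poinc0. apply Rmult_le_compat_l. lra.
  apply ln_le'. apply Rdiv_lt_0_compat; lra.
  apply Rmult_le_reg_r with ((1 - Cmod a) * (1 - Cmod b)). apply Rmult_lt_0_compat; lra.
  replace ((1 + Cmod a) / (1 - Cmod a) * ((1 - Cmod a) * (1 - Cmod b))) with ((1 + Cmod a) * (1 - Cmod b)) by (field; lra).
  replace ((1 + Cmod b) / (1 - Cmod b) * ((1 - Cmod a) * (1 - Cmod b))) with ((1 + Cmod b) * (1 - Cmod a)) by (field; lra).
  nra.
Qed.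

Lemma cross {d} (Om : Cd d -> Prop) (z : Cd d) rho : 0 < rho ->
  forall p u l, chainI Om p u l -> (forall i, Cmod (p i - z i) < rho) -> (exists i, rho <= Cmod (u i - z i)) ->
  exists c l', chainI Om p c l' /\ l' <= l /\ (forall i, Cmod (c i - z i) <= rho) /\ (exists i, rho <= Cmod (c i - z i)).
Proof.
  intros Hr p u l H. induction H; intros Hp Hu.
  - exfalso. destruct Hu as [i Hi]. specialize (Hp i). lra.
  - pose proof (chainI_ge0 _ _ _ _ H1) as Hl.
    destruct (classic (exists i, rho <= Cmod (f zeta i - z i))) as [Hc|Hc].
    + set (h := fun t => mx d (fun i => Cmod (f (RtoC t * zeta)%C i - z i)) - rho).
      assert (Hcont : forall a, 0 <= a <= 1 -> continuity_pt h a).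
      { intros a Ha. unfold h. apply continuity_pt_minus; [|apply continuity_pt_const; intros ? ?; auto].
        apply path_cont; auto. intros i. apply (H (RtoC a * zeta)%C).
        rewrite Cmod_mult, Cmod_R, Rabs_pos_eq by lra. pose proof (Cmod_ge_0 zeta). nra. }
      assert (Hf0 : forall v, f (RtoC 0 * v)%C = f 0%C).
      { intros v. f_equal. ring. }
      assert (Hf1 : f (RtoC 1 * zeta)%C = f zeta) by (f_equal; ring).
      assert (Hh0 : h 0 < 0).
      { unfold h. rewrite Hf0. pose proof (mx_lt d (fun i => Cmod (f 0%C i - z i)) rho Hr Hp). simpl in H2. lra. }
      assert (Hh1 : 0 <= h 1).
      { unfold h. rewrite Hf1. destruct Hc as [i Hi]. pose proof (mx_ge d (fun i => Cmod (f zeta i - z i)) i).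
        simpl in H2. lra. }
      assert (Hs : exists s, 0 <= s <= 1 /\ h s = 0).
      { destruct Hh1 as [Hh1|Hh1].
        - destruct (Ranalysis5.IVT_interv h 0 1) as (s & Hs1 & Hs2); auto. lra. eauto.
        - exists 1. split. lra. auto. }
      destruct Hs as (s & Hs & Hhs).
      assert (Hsz : Cmod (RtoC s * zeta)%C <= Cmod zeta).
      { rewrite Cmod_mult, Cmod_R, Rabs_pos_eq by lra. pose proof (Cmod_ge_0 zeta). nra. }
      exists (f (RtoC s * zeta)%C), (poinc0 (RtoC s * zeta)%C). split.
      apply chainI_disc; auto. lra. split.
      pose proof (poinc0_mono _ _ Hsz H0). lra. unfold h in Hhs. split.
      * intros i. pose proof (mx_ge d (fun i => Cmod (f (RtoC s * zeta)%C i - z i)) i). simpl in H2. lra.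
      * apply (mx_attain d (fun i => Cmod (f (RtoC s * zeta)%C i - z i)) rho Hr). lra.
    + assert (Hin : forall i, Cmod (f zeta i - z i) < rho).
      { intros i. apply Rnot_le_lt. intros Hi. apply Hc. eauto. }
      destruct (IHchainI Hin Hu) as (c & l' & C1 & L1 & Hc1 & Hc2).
      exists c, (poinc0 zeta + l'). split. constructor; auto. split. lra. auto.
Qed.


Lemma my_choice {A B : Type} (P : A -> B -> Prop) : (forall a, exists b, P a b) -> exists g, forall a, P a (g a).
Proof.
  intros H. exists (fun a => proj1_sig (constructive_indefinite_description _ (H a))).
  intros a. exact (proj2_sig (constructive_indefinite_description _ (H a))).
Qed.

Lemma small_inv eps : 0 < eps -> exists N : nat, / (INR N + 1) < eps.
Proof.
  intros He. destruct (INR_archimed eps 1 He) as [n Hn]. exists n.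
  pose proof (pos_INR n). apply Rmult_lt_reg_r with (INR n + 1). lra.
  rewrite Rinv_l by lra. nra.
Qed.

Lemma inv_le_mono (n N : nat) : (N <= n)%nat -> / (INR n + 1) <= / (INR N + 1).
Proof.
  intros H. apply Rinv_le_contravar. pose proof (pos_INR N); lra. apply le_INR in H. lra.
Qed.

Lemma incr_ge (phi : nat -> nat) : (forall n, (phi n < phi (S n))%nat) -> forall n, (n <= phi n)%nat.
Proof. intros H n. induction n. lia. specialize (H n). lia. Qed.

Lemma incr_mono (phi : nat -> nat) : (forall n, (phi n < phi (S n))%nat) -> forall m n, (m <= n)%nat -> (phi m <= phi n)%nat.
Proof. intros H m n Hmn. induction Hmn. lia. specialize (H m0). lia. Qed.

Lemma bw1 (a : nat -> R) M : (forall n, Rabs (a n) <= M) ->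
  exists phi l, (forall n, (phi n < phi (S n))%nat) /\
    forall eps, 0 < eps -> exists N, forall n, (N <= n)%nat -> Rabs (a (phi n) - l) < eps.
Proof.
  intros HM. destruct (Bolzano_Weierstrass a (fun c => -M <= c <= M) (compact_P3 (-M) M)) as [l Hl].
  { intros n. specialize (HM n). unfold Rabs in HM. destruct Rcase_abs; split; lra. }
  assert (H : forall kN : nat * nat, exists p, (snd kN <= p)%nat /\ Rabs (a p - l) < / (INR (fst kN) + 1)).
  { intros [k N]. simpl. assert (Hp : 0 < / (INR k + 1)) by (apply Rinv_0_lt_compat; pose proof (pos_INR k); lra).
    destruct (Hl (disc l (mkposreal _ Hp))) with N as (p & Hp1 & Hp2).
    exists (mkposreal _ Hp). intros y Hy. exact Hy.
    exists p. split; auto. }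
  destruct (my_choice _ H) as [g Hg].
  set (phi := fix phi n := match n with O => g (O, O) | S k => g (S k, S (phi k)) end).
  exists phi, l. split.
  - intros n. simpl. destruct (Hg (S n, S (phi n))) as [H1 _]. simpl in H1. lia.
  - intros eps He. destruct (small_inv eps He) as [N HN]. exists N. intros n Hn.
    assert (Rabs (a (phi n) - l) < / (INR n + 1)).
    { destruct n; simpl. exact (proj2 (Hg (O, O))). exact (proj2 (Hg (S n, S (phi n)))). }
    pose proof (inv_le_mono n N Hn). lra.
Qed.

Lemma Cmod_le_sum (z : C) : Cmod z <= Rabs (fst z) + Rabs (snd z).
Proof.
  unfold Cmod. pose proof (Rabs_pos (fst z)). pose proof (Rabs_pos (snd z)).
  rewrite <- (pow2_abs (fst z)), <- (pow2_abs (snd z)).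
  rewrite <- (sqrt_square (Rabs (fst z) + Rabs (snd z))) by lra.
  apply sqrt_le_1_alt. nra.
Qed.

Definition sub_conv {d} (u : nat -> Cd d) (phi : nat -> nat) (c : Cd d) :=
  (forall n, (phi n < phi (S n))%nat) /\
  forall eps, 0 < eps -> exists N, forall n, (N <= n)%nat -> forall i, Cmod (u (phi n) i - c i) < eps.

Lemma bwd d : forall (u : nat -> Cd d) M, (forall n i, Cmod (u n i) <= M) -> exists phi c, sub_conv u phi c.
Proof.
  induction d; intros u M HM.
  - exists (fun n => n), (fun i => Fin.case0 (fun _ => C) i). split. intros; lia.
    intros eps He. exists O. intros n _ i. exact (Fin.case0 (fun i => Cmod (u n i - Fin.case0 (fun _ => C) i) < eps) i).
  - destruct (bw1 (fun n => fst (u n Fin.F1)) M) as (phi1 & al & Hp1 & Hc1).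
    { intros n. eapply Rle_trans; [apply re_le_Cmod|apply HM]. }
    destruct (bw1 (fun n => snd (u (phi1 n) Fin.F1)) M) as (phi2 & be & Hp2 & Hc2).
    { intros n. eapply Rle_trans; [|apply (HM (phi1 n) Fin.F1)].
      unfold Cmod. rewrite <- sqrt_Rsqr_abs. apply sqrt_le_1. apply Rle_0_sqr. nra. unfold Rsqr. nra. }
    destruct (IHd (fun n i => u (phi1 (phi2 n)) (Fin.FS i)) M) as (phi3 & c' & Hp3 & Hc3).
    { intros n i. apply HM. }
    exists (fun n => phi1 (phi2 (phi3 n))), (fun i => Fin.caseS' i (fun _ => C) (al, be) c').
    split.
    + intros n. pose proof (Hp3 n). pose proof (incr_mono phi2 Hp2 (S (phi3 n)) (phi3 (S n)) ltac:(lia)).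
      pose proof (Hp2 (phi3 n)). pose proof (incr_mono phi1 Hp1 (S (phi2 (phi3 n))) (phi2 (phi3 (S n))) ltac:(lia)).
      pose proof (Hp1 (phi2 (phi3 n))). lia.
    + intros eps He. destruct (Hc1 (eps / 2)) as [N1 HN1]. lra. destruct (Hc2 (eps / 2)) as [N2 HN2]. lra.
      destruct (Hc3 eps He) as [N3 HN3]. exists (N1 + N2 + N3)%nat. intros n Hn i.
      apply (Fin.caseS' i).
      * simpl. eapply Rle_lt_trans. apply Cmod_le_sum. simpl.
        assert (Rabs (fst (u (phi1 (phi2 (phi3 n))) Fin.F1) - al) < eps / 2).
        { apply HN1. pose proof (incr_ge phi2 Hp2 (phi3 n)). pose proof (incr_ge phi3 Hp3 n). lia. }
        assert (Rabs (snd (u (phi1 (phi2 (phi3 n))) Fin.F1) - be) < eps / 2).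
        { apply HN2. pose proof (incr_ge phi3 Hp3 n). lia. }
        unfold Rminus in *. destruct (u (phi1 (phi2 (phi3 n))) Fin.F1). simpl in *. lra.
      * intros j. simpl. apply HN3. lia.
Qed.

Lemma bw_cluster d (u : nat -> Cd d) M : (forall n i, Cmod (u n i) <= M) ->
  exists c, forall eps, 0 < eps -> forall N, exists n, (N <= n)%nat /\ forall i, Cmod (u n i - c i) < eps.
Proof.
  intros HM. destruct (bwd d u M HM) as (phi & c & Hp & Hc). exists c. intros eps He N.
  destruct (Hc eps He) as [N0 HN0]. exists (phi (N + N0)%nat). split.
  pose proof (incr_ge phi Hp (N + N0)). lia. apply HN0. lia.
Qed.

Lemma le_eps (x y : R) : (forall eps, 0 < eps -> x <= y + eps) -> x <= y.
Proof. intros H. apply Rnot_lt_le. intros Hlt. specialize (H ((x - y)/2)). lra. Qed.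

Lemma cluster_closed d (u : nat -> Cd d) (c z : Cd d) rho :
  (forall eps, 0 < eps -> forall N, exists n, (N <= n)%nat /\ forall i, Cmod (u n i - c i) < eps) ->
  (forall n i, Cmod (u n i - z i) <= rho) -> forall i, Cmod (c i - z i) <= rho.
Proof.
  intros Hc Hu i. apply le_eps. intros eps He. destruct (Hc eps He O) as (n & _ & Hn).
  specialize (Hn i). specialize (Hu n i).
  replace (c i - z i)%C with (- (u n i - c i) + (u n i - z i))%C by ring.
  eapply Rle_trans. apply Cmod_triangle. rewrite Cmod_opp. lra.
Qed.


Lemma in_2rho {d} (a z y : Cd d) rho : 0 < rho -> (forall i, Cmod (a i - z i) <= rho) -> near_pt a y (rho / 2) -> near_pt z y (2 * rho).
Proof.
  intros Hr Ha Hy i. specialize (Ha i). specialize (Hy i).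
  replace (y i - z i)%C with ((y i - a i) + (a i - z i))%C by ring.
  eapply Rle_lt_trans. apply Cmod_triangle. lra.
Qed.

Lemma bnd_near {d} (a z : Cd d) rho : (forall i, Cmod (a i - z i) <= rho) -> forall i, Cmod (a i) <= mx d (fun j => Cmod (z j)) + rho.
Proof.
  intros Ha i. specialize (Ha i). pose proof (mx_ge d (fun j => Cmod (z j)) i). simpl in H.
  replace (a i) with ((a i - z i) + z i)%C by ring. eapply Rle_trans. apply Cmod_triangle. lra.
Qed.

Lemma barth {d} (Om : Cd d -> Prop) : is_domain Om -> kob_hyperbolic Om ->
  forall z rho, Om z -> 0 < rho -> (forall w, near_pt z w (2 * rho) -> Om w) ->
  exists m, 0 < m /\ forall u l, chainI Om z u l -> (exists i, rho <= Cmod (u i - z i)) -> m <= l.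
Proof.
  intros Hdom Hhyp z rho Hz Hr HP. apply NNPP. intros Hn.
  assert (Hs : forall n : nat, exists c, exists l', chainI Om z c l' /\ l' < / (INR n + 1) /\
      (forall i, Cmod (c i - z i) <= rho) /\ (exists i, rho <= Cmod (c i - z i))).
  { intros n. apply NNPP. intros Hn2. apply Hn. exists (/ (INR n + 1)). split.
    apply Rinv_0_lt_compat. pose proof (pos_INR n). lra.
    intros u l Hc Hu. apply Rnot_lt_le. intros Hlt.
    destruct (cross Om z rho Hr z u l Hc) as (c & l' & C1 & L1 & Hc1 & Hc2); auto.
    intros i. replace (z i - z i)%C with (RtoC 0) by ring. rewrite Cmod_0. auto.
    apply Hn2. exists c, l'. repeat split; auto. lra. }
  destruct (my_choice _ Hs) as [c Hc].
  destruct (bw_cluster d c (mx d (fun j => Cmod (z j)) + rho)) as [cs Hcs].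
  { intros n i. destruct (Hc n) as (l' & _ & _ & H3 & _). apply (bnd_near _ _ _ H3). }
  assert (Hcs1 : forall i, Cmod (cs i - z i) <= rho).
  { apply (cluster_closed d c cs z rho Hcs). intros n i. destruct (Hc n) as (l' & _ & _ & H3 & _). auto. }
  assert (Hcs2 : Om cs).
  { apply HP. intros i. specialize (Hcs1 i). replace (cs i - z i)%C with (cs i - z i)%C by ring. lra. }
  assert (Hk0 : kob_dist Om z cs <= 0).
  { apply le_eps. intros eps He.
    destruct (small_inv (eps / 2)) as [N HN]. lra.
    set (q := Rmin (rho / 4) (eps * rho / 8)).
    assert (Hq : 0 < q) by (unfold q; apply Rmin_pos; [lra|]; apply Rmult_lt_0_compat; [apply Rmult_lt_0_compat|]; lra).
    destruct (Hcs q Hq N) as (n & Hn1 & Hn2).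
    destruct (Hc n) as (l' & C1 & L1 & H3 & _).
    destruct (ub_kd Om (c n) cs (rho / 2) q) as (l2 & C2 & L2); auto.
    { intros y Hy. apply HP. apply (in_2rho (c n)); auto. }
    { unfold q. pose proof (Rmin_l (rho/4) (eps * rho / 8)). lra. }
    { apply near_pt_sym. intros i. apply Hn2. }
    pose proof (kd_le Om _ _ _ (chainI_app Om _ _ _ _ _ C1 C2)).
    pose proof (inv_le_mono n N Hn1).
    assert (2 * q / (rho / 2) <= eps / 2).
    { replace (2 * q / (rho / 2)) with (4 * q / rho) by (field; lra).
      apply Rmult_le_reg_r with rho. lra. unfold Rdiv. rewrite Rmult_assoc, Rinv_l by lra.
      pose proof (Rmin_r (rho/4) (eps * rho / 8)) as Hq2. fold q in Hq2. nra. }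
    lra. }
  assert (Heq : z = cs).
  { apply NNPP. intros Hne. pose proof (Hhyp z cs Hz Hcs2 Hne). lra. }
  subst cs. destruct (Hcs rho Hr O) as (n & _ & Hn2).
  destruct (Hc n) as (l' & _ & _ & _ & [i Hi]). specialize (Hn2 i). lra.
Qed.

Definition good {d} (Om : Cd d -> Prop) (o x : Cd d) (s : R) (z : Cd d) :=
  Om z /\ forall eps eta, 0 < eps -> 0 < eta -> exists w, Om w /\ near_pt x w eps /\
    kob_dist Om z w - kob_dist Om o w <= - s + eta.

Lemma local_step {d} (Om : Cd d -> Prop) (o x : Cd d) : is_domain Om -> kob_hyperbolic Om ->
  boundary Om x -> Om o -> forall s z, good Om o x s z ->
  exists del, 0 < del /\ forall t, 0 < t <= del -> exists z', good Om o x (s + t / 2) z' /\ kob_dist Om z z' <= t.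
Proof.
  intros Hdom Hhyp [_ Hx] Ho s z [Hz Hg].
  destruct Hdom as [Hop Hrest]. pose proof (conj Hop Hrest) as Hdom.
  destruct (Hop z Hz) as (e & He & HE).
  set (rho := e / 2). assert (Hr : 0 < rho) by (unfold rho; lra).
  assert (HP : forall w, near_pt z w (2 * rho) -> Om w) by (unfold rho; replace (2 * (e / 2)) with e by field; auto).
  destruct (barth Om Hdom Hhyp z rho Hz Hr HP) as (m & Hm & HB).
  exists (m / 2). split. lra. intros t Ht.
  assert (Hxo : exists i, 2 * rho <= Cmod (x i - z i)).
  { apply NNPP. intros Hn. apply Hx. apply HP. intros i. apply Rnot_le_lt. intros Hi. apply Hn. eauto. }
  destruct Hxo as [ix Hix].
  assert (Hs : forall n : nat, exists wu : Cd d * Cd d, Om (fst wu) /\ near_pt x (fst wu) (/ (INR n + 1)) /\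
     kob_dist Om z (fst wu) - kob_dist Om o (fst wu) <= - s + / (INR n + 1) /\
     (exists l1, chainI Om z (snd wu) l1 /\ l1 <= t) /\
     (exists l2, chainI Om (snd wu) (fst wu) l2 /\ l2 <= kob_dist Om z (fst wu) + / (INR n + 1) - t / 2) /\
     (forall i, Cmod (snd wu i - z i) < rho)).
  { intros n. assert (Hin : 0 < / (INR n + 1)) by (apply Rinv_0_lt_compat; pose proof (pos_INR n); lra).
    destruct (Hg (Rmin rho (/ (INR n + 1))) (/ (INR n + 1))) as (w & Hw & Hwx & Hwg); auto.
    apply Rmin_pos; auto.
    assert (Hwo : exists i, rho <= Cmod (w i - z i)).
    { exists ix. specialize (Hwx ix). pose proof (Rmin_l rho (/ (INR n + 1))).
      assert (Cmod (x ix - z ix) <= Cmod (w ix - z ix) + Cmod (w ix - x ix)).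
      { replace (x ix - z ix)%C with ((w ix - z ix) + - (w ix - x ix))%C by ring.
        eapply Rle_trans. apply Cmod_triangle. rewrite Cmod_opp. lra. }
      lra. }
    destruct (kd_approx Om z w (dom_conn Om Hdom z w Hz Hw) (/ (INR n + 1)) Hin) as (L & CL & LL).
    pose proof (HB w L CL Hwo) as HmL.
    destruct (split_chain Om z w L CL t) as (u & l1 & l2 & C1 & L1 & C2 & L2). lra.
    exists (w, u). simpl. split; auto. split.
    { eapply near_pt_mono; [|eauto]. apply Rmin_r. }
    split; auto. split. eauto. split. exists l2. split; auto. lra.
    intros i. apply Rnot_le_lt. intros Hi. assert (m <= l1) by (apply (HB u l1 C1); eauto). lra. }
  destruct (my_choice _ Hs) as [wu Hwu].
  set (w := fun n => fst (wu n)). set (u := fun n => snd (wu n)).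
  destruct (bw_cluster d u (mx d (fun j => Cmod (z j)) + rho)) as [us Hus].
  { intros n i. apply (bnd_near (u n) z rho). intros j. destruct (Hwu n) as (_&_&_&_&_&H6). unfold u. left; auto. }
  assert (Hus1 : forall i, Cmod (us i - z i) <= rho).
  { apply (cluster_closed d u us z rho Hus). intros n i. destruct (Hwu n) as (_&_&_&_&_&H6). unfold u. left; auto. }
  assert (HPus : forall y, near_pt us y (rho / 2) -> Om y).
  { intros y Hy. apply HP. apply (in_2rho us); auto. }
  assert (Hqb : forall q, 0 < q -> q <= rho / 4 -> 2 * q / (rho / 2) = 4 * q / rho).
  { intros. field. lra. }
  exists us. split.
  - split. apply HP. intros i. specialize (Hus1 i). lra.
    intros eps eta Heps Heta.
    destruct (small_inv (Rmin eps (eta / 4))) as [N HN]. apply Rmin_pos; lra.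
    set (q := Rmin (rho / 4) (eta * rho / 8)).
    assert (Hq : 0 < q) by (unfold q; apply Rmin_pos; [lra|]; apply Rmult_lt_0_compat; [apply Rmult_lt_0_compat|]; lra).
    destruct (Hus q Hq N) as (n & Hn1 & Hn2).
    destruct (Hwu n) as (H1 & H2 & H3 & (l1 & C1 & L1) & (l2 & C2 & L2) & H6).
    fold (w n) (u n) in *.
    exists (w n). split; auto.
    pose proof (inv_le_mono n N Hn1) as Hmono.
    pose proof (Rmin_l eps (eta / 4)). pose proof (Rmin_r eps (eta / 4)).
    split. { eapply near_pt_mono; [|eauto]. lra. }
    destruct (ub_kd Om us (u n) (rho / 2) q) as (l3 & C3 & L3); auto.
    { unfold q. pose proof (Rmin_l (rho/4) (eta * rho / 8)). lra. }
    assert (Hl3 : l3 <= eta / 2).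
    { rewrite Hqb in L3; auto. 2: { unfold q. apply Rmin_l. }
      assert (4 * q / rho <= eta / 2).
      { apply Rmult_le_reg_r with rho. lra. unfold Rdiv. rewrite Rmult_assoc, Rinv_l by lra.
        pose proof (Rmin_r (rho/4) (eta * rho / 8)) as Hq2. fold q in Hq2. nra. }
      lra. }
    pose proof (kd_tri Om us (u n) (w n) (ex_intro _ l3 C3) (ex_intro _ l2 C2)).
    pose proof (kd_le Om _ _ _ C3). pose proof (kd_le Om _ _ _ C2). lra.
  - apply le_eps. intros eps Heps.
    set (q := Rmin (rho / 4) (eps * rho / 8)).
    assert (Hq : 0 < q) by (unfold q; apply Rmin_pos; [lra|]; apply Rmult_lt_0_compat; [apply Rmult_lt_0_compat|]; lra).
    destruct (Hus q Hq O) as (n & _ & Hn2). rename Heps into He0.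
    destruct (Hwu n) as (H1 & H2 & H3 & (l1 & C1 & L1) & (l2 & C2 & L2) & H6).
    fold (w n) (u n) in *.
    destruct (ub_kd Om (u n) us (rho / 2) q) as (l3 & C3 & L3); auto.
    { intros y Hy. apply HP. apply (in_2rho (u n)); auto. intros i; left; auto. }
    { unfold q. pose proof (Rmin_l (rho/4) (eps * rho / 8)). lra. }
    { apply near_pt_sym. intros i. apply Hn2. }
    assert (Hl3 : l3 <= eps).
    { rewrite Hqb in L3; auto. 2: { unfold q. apply Rmin_l. }
      assert (4 * q / rho <= eps / 2).
      { apply Rmult_le_reg_r with rho. lra. unfold Rdiv. rewrite Rmult_assoc, Rinv_l by lra.
        pose proof (Rmin_r (rho/4) (eps * rho / 8)) as Hq2. fold q in Hq2. nra. }
      lra. }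
    pose proof (kd_le Om _ _ _ (chainI_app Om _ _ _ _ _ C1 C3)). lra.
Qed.


Lemma good_o {d} (Om : Cd d -> Prop) o x : boundary Om x -> Om o -> good Om o x 0 o.
Proof.
  intros [Hc _] Ho. split; auto. intros eps eta He Hn. destruct (Hc eps He) as (a & Ha & Hxa).
  exists a. split; auto. split; auto. lra.
Qed.

Lemma lub_half (E : R -> Prop) : E 0 -> (forall b, E b -> b <= 1) ->
  exists b, E b /\ forall b', E b' -> b' <= 2 * b.
Proof.
  intros H0 H1. destruct (completeness E) as [A [HA1 HA2]].
  exists 1. intros b Hb. apply H1; auto. eauto.
  destruct (Rle_dec A 0) as [Hle|Hgt].
  - exists 0. split; auto. intros b' Hb'. specialize (HA1 b' Hb'). lra.
  - assert (~ is_upper_bound E (A / 2)). { intros Hu. specialize (HA2 _ Hu). lra. }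
    apply not_all_ex_not in H. destruct H as [b Hb]. apply imply_to_and in Hb. destruct Hb as [Hb1 Hb2].
    exists b. split; auto. intros b' Hb'. specialize (HA1 b' Hb'). lra.
Qed.

Lemma good_unbounded {d} (Om : Cd d -> Prop) o x : complete_kob_hyperbolic Om -> boundary Om x -> Om o ->
  forall T, exists s z, T <= s /\ good Om o x s z.
Proof.
  intros [Hdom [Hhyp Hcomp]] Hx Ho T. apply NNPP. intros Hn.
  assert (Hb : forall s z, good Om o x s z -> s < T).
  { intros s z Hg. apply Rnot_le_lt. intros Hs. apply Hn. eauto. }
  set (Reach := fun z s b => 0 <= b <= 1 /\ exists z', good Om o x (s + b) z' /\ kob_dist Om z z' <= 2 * b).
  assert (Hst : forall zs : Cd d * R, exists zs' : Cd d * R, good Om o x (snd zs) (fst zs) ->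
     good Om o x (snd zs') (fst zs') /\ snd zs <= snd zs' /\
     kob_dist Om (fst zs) (fst zs') <= 2 * (snd zs' - snd zs) /\
     forall b, Reach (fst zs) (snd zs) b -> b <= 2 * (snd zs' - snd zs)).
  { intros [z s]. simpl. destruct (classic (good Om o x s z)) as [Hg|Hg].
    - destruct (lub_half (Reach z s)) as (b & (Hb1 & z' & Hz'1 & Hz'2) & Hb2').
      + split. lra. exists z. split. rewrite Rplus_0_r; auto. rewrite kd_refl. lra.
      + intros b0 [Hb0 _]. lra.
      + exists (z', s + b). intros _. simpl. split; auto. split. lra.
        replace (s + b - s) with b by ring. split; auto.
    - exists (z, s). intros H. contradiction. }
  destruct (my_choice _ Hst) as [F HF].
  set (X := fix X n := match n with O => (o, 0) | S k => F (X k) end).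
  set (z := fun n => fst (X n)). set (s := fun n => snd (X n)).
  assert (Hgood : forall n, good Om o x (s n) (z n)).
  { induction n. apply good_o; auto. apply (HF (X n) IHn). }
  assert (Hstep : forall n, s n <= s (S n) /\ kob_dist Om (z n) (z (S n)) <= 2 * (s (S n) - s n) /\
      forall b, Reach (z n) (s n) b -> b <= 2 * (s (S n) - s n)).
  { intros n. destruct (HF (X n) (Hgood n)) as (_ & H2 & H3 & H4). auto. }
  assert (HOm : forall n, Om (z n)) by (intros n; apply (Hgood n)).
  assert (Hcn : forall m n, conn Om (z m) (z n)) by (intros; apply dom_conn; auto).
  assert (Hmono : forall m n, (m <= n)%nat -> s m <= s n /\ kob_dist Om (z m) (z n) <= 2 * (s n - s m)).
  { intros m n Hmn. induction Hmn. rewrite kd_refl. lra.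
    destruct (Hstep m0) as (H1 & H2 & _). pose proof (kd_tri Om (z m) (z m0) (z (S m0)) (Hcn _ _) (Hcn _ _)). lra. }
  assert (HsT : forall n, s n < T) by (intros n; apply (Hb _ _ (Hgood n))).
  destruct (completeness (fun r => exists n, r = s n)) as [Sp [HS1 HS2]].
  { exists T. intros r [n Hr]. subst. left; auto. }
  { exists (s O). eauto. }
  assert (HsS : forall n, s n <= Sp) by (intros n; apply HS1; eauto).
  assert (Hconv : forall eps, 0 < eps -> exists N, forall n, (N <= n)%nat -> Sp - s n < eps).
  { intros eps He. apply NNPP. intros Hn'.
    assert (is_upper_bound (fun r => exists n, r = s n) (Sp - eps)).
    { intros r [n Hr]. subst. apply Rnot_lt_le. intros Hlt. apply Hn'. exists n. intros n' Hn''.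
      pose proof (proj1 (Hmono n n' Hn'')). lra. }
    specialize (HS2 _ H). lra. }
  assert (Hcauchy : forall eps, 0 < eps -> exists N, forall m n, (N <= m)%nat -> (N <= n)%nat ->
      kob_dist Om (z m) (z n) < eps).
  { intros eps He. destruct (Hconv (eps / 4)) as [N HN]. lra. exists N. intros m n Hm Hn'.
    destruct (Compare_dec.le_lt_dec m n) as [Hmn|Hmn].
    - pose proof (proj2 (Hmono m n Hmn)). pose proof (HN m Hm). pose proof (HsS n). lra.
    - rewrite kd_sym. pose proof (proj2 (Hmono n m ltac:(lia))). pose proof (HN n Hn'). pose proof (HsS m). lra. }
  destruct (Hcomp z HOm Hcauchy) as (zi & Hzi & Hlim).
  assert (Hczi : forall n, conn Om (z n) zi) by (intros; apply dom_conn; auto).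
  assert (Hdist : forall m, kob_dist Om (z m) zi <= 2 * (Sp - s m)).
  { intros m. apply le_eps. intros eps He. destruct (Hlim eps He) as [N HN].
    pose proof (HN (m + N)%nat ltac:(lia)). pose proof (proj2 (Hmono m (m + N)%nat ltac:(lia))).
    pose proof (kd_tri Om (z m) (z (m + N)%nat) zi (Hcn _ _) (Hczi _)). pose proof (HsS (m + N)%nat). lra. }
  assert (Hgi : good Om o x Sp zi).
  { split; auto. intros eps eta He Heta. destruct (Hconv (eta / 6)) as [N HN]. lra.
    destruct (Hgood N) as [_ HgN]. destruct (HgN eps (eta / 3)) as (w & Hw & Hwx & Hwg); auto. lra.
    exists w. split; auto. split; auto.
    pose proof (kd_tri Om zi (z N) w (conn_sym _ _ _ (Hczi N)) (dom_conn Om Hdom _ _ (HOm N) Hw)).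
    rewrite (kd_sym Om zi (z N)) in H. pose proof (Hdist N). pose proof (HN N (le_n N)). lra. }
  destruct (local_step Om o x Hdom Hhyp Hx Ho Sp zi Hgi) as (del & Hdel & Hloc).
  set (t := Rmin del 1). assert (Ht : 0 < t <= del) by (unfold t; split; [apply Rmin_pos; lra| apply Rmin_l]).
  assert (Ht1 : t <= 1) by (unfold t; apply Rmin_r).
  destruct (Hloc t Ht) as (z2 & Hz2 & Hz2d).
  destruct (Hconv (Rmin (1/2) (t / 8))) as [N HN]. apply Rmin_pos; lra.
  specialize (HN N (le_n N)). pose proof (Rmin_l (1/2) (t/8)). pose proof (Rmin_r (1/2) (t/8)).
  set (b := (Sp - s N) + t / 2).
  assert (HR : Reach (z N) (s N) b).
  { split. pose proof (HsS N). unfold b; lra. exists z2. split.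
    replace (s N + b) with (Sp + t / 2) by (unfold b; ring). auto.
    pose proof (kd_tri Om (z N) zi z2 (Hczi N) (dom_conn Om Hdom _ _ Hzi (proj1 Hz2))).
    pose proof (Hdist N). unfold b. lra. }
  destruct (Hstep N) as (_ & _ & H4). specialize (H4 b HR). pose proof (HsS (S N)). unfold b in H4. lra.
Qed.


Lemma good_horo {d} (Om : Cd d -> Prop) o x Rr s z : good Om o x s z -> - (/ 2 * ln Rr) + 1 <= s ->
  horoball Om o x Rr z.
Proof.
  intros [Hz Hg] Hs. split; auto. unfold liminf_at.
  destruct (Lub_Rbar_correct (fun r => exists eps, 0 < eps /\ (forall w, Om w -> near_pt x w eps ->
      r <= kob_dist Om z w - kob_dist Om o w))) as [_ Hl].
  apply Rbar_le_lt_trans with (Finite (- s + / 2)).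
  - apply Hl. intros r (eps & He & Hr). destruct (Hg eps (/ 2) He) as (w & Hw & Hwx & Hwg). lra.
    specialize (Hr w Hw Hwx). simpl. lra.
  - simpl. lra.
Qed.

Theorem lemma3p2 (d : nat) (Om : Cd d -> Prop) :
  complete_kob_hyperbolic Om ->
  forall (o x : Cd d) (Rr : R), Om o -> boundary Om x -> 0 < Rr ->
    (exists z, horoball Om o x Rr z) /\
    (is_bounded Om ->
       exists y, closure (horoball Om o x Rr) y /\ boundary Om y).
Proof.
  intros Hc o x Rr Ho Hx HR. pose proof Hc as [Hdom [Hhyp Hcomp]].
  set (T0 := - (/ 2 * ln Rr) + 1).
  split.
  - destruct (good_unbounded Om o x Hc Hx Ho T0) as (s & z & Hs & Hg).
    exists z. eapply good_horo; eauto.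
  - intros [M HM].
    assert (Hs : forall n : nat, exists z, exists s, Rmax T0 (INR n) <= s /\ good Om o x s z).
    { intros n. destruct (good_unbounded Om o x Hc Hx Ho (Rmax T0 (INR n))) as (s & z & H1 & H2). eauto. }
    destruct (my_choice _ Hs) as [z Hz].
    assert (Hzh : forall n, horoball Om o x Rr (z n)).
    { intros n. destruct (Hz n) as (s & H1 & H2). eapply good_horo; eauto. pose proof (Rmax_l T0 (INR n)). unfold T0 in *. lra. }
    assert (HzO : forall n, Om (z n)) by (intros n; apply (Hzh n)).
    assert (Hzd : forall n, INR n - 1 <= kob_dist Om o (z n)).
    { intros n. destruct (Hz n) as (s & H1 & [_ H2]). destruct (H2 1 1) as (w & Hw & _ & Hwg); try lra.
      pose proof (kd_tri Om o (z n) w (dom_conn Om Hdom _ _ Ho (HzO n)) (dom_conn Om Hdom _ _ (HzO n) Hw)).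
      pose proof (Rmax_r T0 (INR n)). lra. }
    destruct (bw_cluster d z M) as [y Hy].
    { intros n i. apply HM. auto. }
    exists y. split.
    + intros eps He. destruct (Hy eps He O) as (n & _ & Hn). exists (z n). split; auto.
    + split.
      * intros eps He. destruct (Hy eps He O) as (n & _ & Hn). exists (z n). split; auto.
      * intros Hyo. destruct Hdom as [Hop _]. destruct (Hop y Hyo) as (e & He & HE).
        destruct (INR_archimed 1 (kob_dist Om o y + 2)) as [N HN]. lra.
        destruct (Hy (e / 4) ltac:(lra) N) as (n & Hn1 & Hn2).
        destruct (ub_kd Om y (z n) e (e / 4)) as (l & Cl & Ll); auto; try lra.
        all: try (intros i; apply Hn2). idtac.
        pose proof (kd_le Om _ _ _ Cl).
        pose proof (kd_tri Om o y (z n) (dom_conn Om (conj Hop (proj2 (proj1 Hc))) _ _ Ho Hyo) (ex_intro _ l Cl)).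
        pose proof (Hzd n). apply le_INR in Hn1.
        replace (2 * (e / 4) / e) with (/ 2) in Ll by (field; lra). lra.
Qed.
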